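(* Let $p\in(1,\infty)$ and let $Y$ be a Banach space admitting an equivalent norm with $(\beta)$-modulus of power type $p$. Then there is a constant $C=C(Y)>0$ such that for every integer $l\ge1$, $$c_Y(P^\omega_l)\ge C\,l^{1/p}.$$
   Context: For a Banach space $X$ with closed unit ball $B_X$ and a sequence $(y_n)_{n\ge1}$ in $X$, let $\mathrm{sep}[(y_n)]:=\inf\{\|y_m-y_n\|: m\neq n\}$. The $(\beta)$-modulus of a norm is $$\overline{\beta}_X(t):=1-\sup\Big\{\inf_{n\ge1}\tfrac{\|x+y_n\|}{2}\ :\ x\in B_X,\ (y_n)_{n\ge1}\subset B_X,\ \mathrm{sep}[(y_n)]\ge t\Big\},$$ and the norm has $(\beta)$-modulus of power type $p$ if there is $c>0$ with $\overline{\beta}_X(t)\ge ct^p$ for all $t\in(0,2]$. The parasol graph $P^\omega_1$ has vertex set $\{r,b,s\}\cup\{t_i:i\ge1\}$ and edges $\{r,b\}$, $\{b,t_i\}$, $\{t_i,s\}$ ($i\ge1$). For $l\ge2$, $P^\omega_l$ is obtained from $P^\omega_{l-1}$ by replacing every edge $\{u,v\}$ of $P^\omega_{l-1}$ by a copy of $P^\omega_1$, identifying the vertex $r$ of the copy with one endpoint of the edge and the vertex $s$ of the copy with the other endpoint (the claim holds for any such choice of identifications). Each $P^\omega_l$ carries the unweighted shortest-path metric. The distortion of an injective map is $\mathrm{dist}(f)=\mathrm{Lip}(f)\mathrm{Lip}(f^{-1})$ and $c_Y(M):=\inf\{\mathrm{dist}(f): f\colon M\to Y\text{ injective}\}$ ($+\infty$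 if no bi-Lipschitz embedding exists). *)

(* Defs.v *)
From Stdlib Require Import Reals Lra Classical ClassicalEpsilon.
Open Scope R_scope.

Lemma Rsup_spec_ex (E : R -> Prop) :
  exists l, is_lub E l \/ ((~ exists l', is_lub E l') /\ l = 0).
Proof.
  destruct (classic (exists l', is_lub E l')) as [[l H]|H].
  - exists l; now left.
  - exists 0; now right.
Qed.

(* sup E when it exists in R (E nonempty, bounded above); 0 otherwise *)
Definition Rsup (E : R -> Prop) : R :=
  proj1_sig (constructive_indefinite_description _ (Rsup_spec_ex E)).

Definition Rinf (E : R -> Prop) : R := - Rsup (fun v => E (- v)).

Record Banach := {
  carrier :> Type;
  vzero : carrier;
  vadd : carrier -> carrier -> carrier;
  vopp : carrier -> carrier;
  vscal : R -> carrier -> carrier;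
  vnorm : carrier -> R;
  vadd_assoc : forall x y z, vadd x (vadd y z) = vadd (vadd x y) z;
  vadd_comm : forall x y, vadd x y = vadd y x;
  vadd_0 : forall x, vadd x vzero = x;
  vadd_opp : forall x, vadd x (vopp x) = vzero;
  vscal_1 : forall x, vscal 1 x = x;
  vscal_assoc : forall a b x, vscal a (vscal b x) = vscal (a * b) x;
  vscal_distr_v : forall a x y, vscal a (vadd x y) = vadd (vscal a x) (vscal a y);
  vscal_distr_s : forall a b x, vscal (a + b) x = vadd (vscal a x) (vscal b x);
  vnorm_nonneg : forall x, 0 <= vnorm x;
  vnorm_eq0 : forall x, vnorm x = 0 -> x = vzero;
  vnorm_scal : forall a x, vnorm (vscal a x) = Rabs a * vnorm x;
  vnorm_triangle : forall x y, vnorm (vadd x y) <= vnorm x + vnorm y;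
  vcomplete : forall u : nat -> carrier,
    (forall eps, 0 < eps -> exists N, forall m n, (N <= m)%nat -> (N <= n)%nat ->
        vnorm (vadd (u m) (vopp (u n))) < eps) ->
    exists l, forall eps, 0 < eps -> exists N, forall n, (N <= n)%nat ->
        vnorm (vadd (u n) (vopp l)) < eps
}.

Definition vsub (Y : Banach) (x y : Y) : Y := vadd Y x (vopp Y y).

Definition equiv_norm (Y : Banach) (N : Y -> R) : Prop :=
  (forall x, 0 <= N x) /\
  (forall x, N x = 0 -> x = vzero Y) /\
  (forall a x, N (vscal Y a x) = Rabs a * N x) /\
  (forall x y, N (vadd Y x y) <= N x + N y) /\
  exists a b, 0 < a /\ 0 < b /\ forall x, a * vnorm Y x <= N x /\ N x <= b * vnorm Y x.

Definition sep (Y : Banach) (N : Y -> R) (y : nat -> Y) : R :=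
  Rinf (fun v => exists m n, m <> n /\ v = N (vsub Y (y m) (y n))).

Definition beta_modulus (Y : Banach) (N : Y -> R) (t : R) : R :=
  1 - Rsup (fun v => exists (x : Y) (y : nat -> Y),
            N x <= 1 /\ (forall n, N (y n) <= 1) /\ t <= sep Y N y /\
            v = Rinf (fun w => exists n, w = N (vadd Y x (y n)) / 2)).

Definition beta_power_type (Y : Banach) (N : Y -> R) (p : R) : Prop :=
  exists c, 0 < c /\ forall t, 0 < t -> t <= 2 -> beta_modulus Y N t >= c * Rpower t p.

Inductive EP1 : Type := ERB | EBT (i : nat) | ETS (i : nat).

Fixpoint PEdge (l : nat) : Type :=
  match l with O => unit | S k => (PEdge k * EP1)%type end.

(* vertices of P_l: the vertices of P_(l-1), plus for each edge e of P_(l-1)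
   the new vertices b_e (None) and t_(e,i) (Some i) *)
Fixpoint PVert (l : nat) : Type :=
  match l with O => bool | S k => (PVert k + PEdge k * option nat)%type end.

(* an orientation: for each level k and edge e of P_k, whether the first
   endpoint of e is identified with r of the copy of P_1 (true) or with s *)
Definition orientation := forall k, PEdge k -> bool.

Fixpoint pends (o : orientation) (l : nat) : PEdge l -> PVert l * PVert l :=
  match l return PEdge l -> PVert l * PVert l with
  | O => fun _ => (false, true)
  | S k => fun ex =>
      let e := fst ex in
      let uv := pends o k e in
      let rs := if o k e then uv else (snd uv, fst uv) in
      match snd ex with
      | ERB => (inl (fst rs), inr (e, None))
      | EBT i => (inr (e, None), inr (e, Some i))
      | ETS i => (inr (e, Some i), inl (snd rs))
      end
  end.

Definition padj (o : orientation) (l : nat) (u v : PVert l) : Prop :=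
  exists e, pends o l e = (u, v) \/ pends o l e = (v, u).

Inductive pwalk (o : orientation) (l : nat) : PVert l -> PVert l -> nat -> Prop :=
  | pwalk0 : forall u, pwalk o l u u 0
  | pwalkS : forall u w v n, padj o l u w -> pwalk o l w v n -> pwalk o l u v (S n).

(* shortest-path metric of P_l (P_l is connected, so the set is nonempty) *)
Definition pdist (o : orientation) (l : nat) (u v : PVert l) : R :=
  Rinf (fun r => exists n, pwalk o l u v n /\ r = INR n).

(* Lip(f), Lip(f^{-1}) as infima of Lipschitz constants (= sup of ratios);
   only evaluated for bi-Lipschitz maps, see cY_ge *)
Definition is_Lip_const (Y : Banach) (o : orientation) (l : nat)
  (f : PVert l -> Y) (L : R) : Prop :=
  forall u v, vnorm Y (vsub Y (f u) (f v)) <= L * pdist o l u v.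

Definition is_invLip_const (Y : Banach) (o : orientation) (l : nat)
  (f : PVert l -> Y) (L : R) : Prop :=
  forall u v, pdist o l u v <= L * vnorm Y (vsub Y (f u) (f v)).

Definition Lip (Y : Banach) (o : orientation) (l : nat) (f : PVert l -> Y) : R :=
  Rinf (fun L => 0 <= L /\ is_Lip_const Y o l f L).

Definition invLip (Y : Banach) (o : orientation) (l : nat) (f : PVert l -> Y) : R :=
  Rinf (fun L => 0 <= L /\ is_invLip_const Y o l f L).

Definition bi_Lipschitz (Y : Banach) (o : orientation) (l : nat) (f : PVert l -> Y) : Prop :=
  (exists L, is_Lip_const Y o l f L) /\ (exists L, is_invLip_const Y o l f L).

(* c_Y(P_l) >= K : every injective f has dist(f) = Lip(f)Lip(f^-1) >= K,
   where dist(f) = +oo (so the bound holds) when f is not bi-Lipschitz *)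
Definition cY_ge (Y : Banach) (o : orientation) (l : nat) (K : R) : Prop :=
  forall f : PVert l -> Y, (forall u v, f u = f v -> u = v) ->
    bi_Lipschitz Y o l f -> K <= Lip Y o l f * invLip Y o l f.

(* Main.v *)
Require Import Defs.
From Stdlib Require Import Reals.
Open Scope R_scope.
From Stdlib Require Import Lra Lia Classical ClassicalEpsilon.

Lemma Rsup_prop E : is_lub E (Rsup E) \/ ((~ exists l', is_lub E l') /\ Rsup E = 0).
Proof. unfold Rsup. destruct (constructive_indefinite_description _ _) as [l H]. simpl. exact H. Qed.

Lemma Rsup_lub E x M : E x -> (forall y, E y -> y <= M) -> is_lub E (Rsup E).
Proof. intros Ex HM. destruct (Rsup_prop E) as [H|[H _]]; auto.
 exfalso; apply H. destruct (completeness E) as [m Hm].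
 exists M; intros y Hy; auto. exists x; auto. exists m; auto. Qed.

Lemma Rsup_ge E x M : E x -> (forall y, E y -> y <= M) -> x <= Rsup E.
Proof. intros Ex HM. destruct (Rsup_lub E x M Ex HM) as [H1 H2]. apply H1; auto. Qed.

Lemma Rsup_le E x M : E x -> (forall y, E y -> y <= M) -> Rsup E <= M.
Proof. intros Ex HM. destruct (Rsup_lub E x M Ex HM) as [H1 H2]. apply H2; intros y Hy; auto. Qed.

Lemma Rinf_le E x m : E x -> (forall y, E y -> m <= y) -> Rinf E <= x.
Proof. intros Ex Hm. unfold Rinf.
 assert (- x <= Rsup (fun v => E (- v))); [|lra].
 apply (Rsup_ge _ _ (- m)). rewrite Ropp_involutive; auto.
 intros y Hy. specialize (Hm _ Hy). lra. Qed.

Lemma Rinf_ge E x m : E x -> (forall y, E y -> m <= y) -> m <= Rinf E.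
Proof. intros Ex Hm. unfold Rinf.
 assert (Rsup (fun v => E (- v)) <= - m); [|lra].
 apply (Rsup_le _ (- x)). rewrite Ropp_involutive; auto.
 intros y Hy. specialize (Hm _ Hy). lra. Qed.

Lemma Rinf_nonneg E : (forall y, E y -> 0 <= y) -> 0 <= Rinf E.
Proof. intros H. destruct (classic (exists x, E x)) as [[x Ex]|Hn].
 - apply (Rinf_ge _ x); auto.
 - unfold Rinf. destruct (Rsup_prop (fun v => E (- v))) as [[H1 H2]|[_ H1]].
   + exfalso. assert (Rsup (fun v => E (- v)) <= Rsup (fun v => E (- v)) - 1).
     apply H2. intros y Hy. exfalso; apply Hn; eauto. lra.
   + rewrite H1; lra. Qed.

Section Vec.
Variable Y : Banach.

Lemma g1 x : vadd Y (vzero Y) x = x. Proof. rewrite vadd_comm, vadd_0; auto. Qed.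
Lemma g2 x y z : vadd Y x y = vadd Y x z -> y = z.
Proof. intros H. assert (vadd Y (vopp Y x) (vadd Y x y) = vadd Y (vopp Y x) (vadd Y x z)) by (rewrite H; auto).
 rewrite !vadd_assoc, (vadd_comm _ (vopp Y x)), vadd_opp, !g1 in H0. auto. Qed.
Lemma g3 x y : vadd Y x y = vzero Y -> y = vopp Y x.
Proof. intros H. apply (g2 x). rewrite H, vadd_opp; auto. Qed.
Lemma scal0 x : vscal Y 0 x = vzero Y.
Proof. apply (g2 (vscal Y 0 x)). rewrite vadd_0, <- vscal_distr_s, Rplus_0_l; auto. Qed.
Lemma oppscal x : vopp Y x = vscal Y (-1) x.
Proof. symmetry; apply g3. rewrite <- (vscal_1 Y x) at 1. rewrite <- vscal_distr_s.
 replace (1 + -1) with 0 by ring. apply scal0. Qed.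
Lemma vsub_add a b c : vadd Y (vsub Y a b) (vsub Y b c) = vsub Y a c.
Proof. unfold vsub. rewrite vadd_assoc. f_equal. rewrite <- vadd_assoc, (vadd_comm _ (vopp Y b)), vadd_opp, vadd_0; auto. Qed.
Lemma vsub_rev a b : vsub Y b a = vopp Y (vsub Y a b).
Proof. apply g3. rewrite vsub_add. unfold vsub; apply vadd_opp. Qed.
Lemma scal_opp k w : vscal Y k (vopp Y w) = vopp Y (vscal Y k w).
Proof. rewrite !oppscal, !vscal_assoc, Rmult_comm; auto. Qed.
Lemma opp_add x y : vopp Y (vadd Y x y) = vadd Y (vopp Y x) (vopp Y y).
Proof. rewrite !oppscal, vscal_distr_v; auto. Qed.
Lemma opp_opp x : vopp Y (vopp Y x) = x.
Proof. rewrite !oppscal, vscal_assoc. replace (-1 * -1) with 1 by ring. apply vscal_1. Qed.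
Lemma vsub_sub a b c : vsub Y (vsub Y a c) (vsub Y b c) = vsub Y a b.
Proof. unfold vsub at 1. rewrite <- (vsub_rev b c). apply vsub_add. Qed.
Lemma vsub_scal k a b : vsub Y (vscal Y k a) (vscal Y k b) = vscal Y k (vsub Y a b).
Proof. unfold vsub. rewrite vscal_distr_v, scal_opp. auto. Qed.

Variable N : Y -> R.
Hypothesis HN : equiv_norm Y N.
Lemma N_sym a b : N (vsub Y a b) = N (vsub Y b a).
Proof. destruct HN as (_&_&Hs&_). rewrite (vsub_rev b a), oppscal, Hs. replace (Rabs (-1)) with 1. ring. rewrite Rabs_left; lra. Qed.
Lemma N_tri a b c : N (vsub Y a c) <= N (vsub Y a b) + N (vsub Y b c).
Proof. destruct HN as (_&_&_&Ht&_). rewrite <- vsub_add with (b := b). apply Ht. Qed.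
End Vec.


Fixpoint addS (m k : nat) : nat := match m with O => k | S m' => addS m' (S k) end.
Fixpoint up (m : nat) : forall k, PVert k -> PVert (addS m k) :=
  match m return forall k, PVert k -> PVert (addS m k) with
  | O => fun k v => v
  | S m' => fun k v => up m' (S k) (inl v : PVert (S k)) end.

Lemma addS_0 l : addS l 0 = l.
Proof. assert (forall m k, addS m k = (m + k)%nat). induction m; simpl; intros; auto. rewrite IHm; lia.
 rewrite H; lia. Qed.

Section G.
Variable o : orientation.

Lemma pwalk_app n u w v a b : pwalk o n u w a -> pwalk o n w v b -> pwalk o n u v (a + b).
Proof. induction 1; simpl; auto. intros. econstructor; eauto. Qed.
Lemma padj_sym n u v : padj o n u v -> padj o n v u.
Proof. intros [e [H|H]]; exists e; auto. Qed.
Lemma pwalk_rev n u v a : pwalk o n u v a -> pwalk o n v u a.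
Proof. induction 1. constructor. replace (S n0) with (n0 + 1)%nat by lia.
 eapply pwalk_app; eauto. econstructor. apply padj_sym; eauto. constructor. Qed.
Lemma pwalk1 n u v : padj o n u v -> pwalk o n u v 1.
Proof. intros; econstructor; eauto; constructor. Qed.

Definition rsof k (e : PEdge k) : PVert k * PVert k :=
  let uv := pends o k e in if o k e then uv else (snd uv, fst uv).

Lemma adj_rs k e : padj o k (fst (rsof k e)) (snd (rsof k e)).
Proof. unfold rsof. exists e. destruct (o k e); simpl; destruct (pends o k e); auto. Qed.
Lemma adjRB k e : padj o (S k) (inl (fst (rsof k e))) (inr (e, None)).
Proof. exists (e, ERB). left. reflexivity. Qed.
Lemma adjBT k e i : padj o (S k) (inr (e, None)) (inr (e, Some i)).
Proof. exists (e, EBT i). left. reflexivity. Qed.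
Lemma adjTS k e i : padj o (S k) (inr (e, Some i)) (inl (snd (rsof k e))).
Proof. exists (e, ETS i). left. reflexivity. Qed.

Lemma walk_up m : forall k u v, padj o k u v -> pwalk o (addS m k) (up m k u) (up m k v) (3 ^ m).
Proof. induction m; intros k u v H.
 - simpl. apply pwalk1; auto.
 - simpl. assert (W : pwalk o (addS m (S k)) (up m (S k) (inl (fst (rsof k (proj1_sig (constructive_indefinite_description _ H))))))
         (up m (S k) (inl (snd (rsof k (proj1_sig (constructive_indefinite_description _ H)))))) (3 ^ m + (3 ^ m + (3 ^ m + 0)))).
   { eapply pwalk_app. apply IHm, adjRB. eapply pwalk_app. apply IHm, (adjBT _ _ 0). eapply pwalk_app. apply IHm, adjTS. constructor. }
   destruct (constructive_indefinite_description _ H) as [e He]; simpl in W.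
   unfold rsof in W. destruct (o k e); destruct He as [He|He]; rewrite He in W; simpl in W; auto using pwalk_rev.
Qed.

Definition Lipf n (phi : PVert n -> R) eps := forall u v, padj o n u v -> Rabs (phi u - phi v) <= eps.

Lemma walk_bound n phi eps u v w : Lipf n phi eps -> pwalk o n u v w -> Rabs (phi u - phi v) <= INR w * eps.
Proof. intros HL; induction 1. replace (phi u - phi u) with 0 by ring. rewrite Rabs_R0. simpl; lra.
 rewrite S_INR. specialize (HL _ _ H).
 replace (phi u - phi v) with ((phi u - phi w) + (phi w - phi v)) by ring.
 eapply Rle_trans. apply Rabs_triang. lra. Qed.

Lemma abs_bnd x e : Rabs x <= e -> - e <= x <= e.
Proof. intros H. pose proof (Rle_abs x). pose proof (Rle_abs (- x)). rewrite Rabs_Ropp in H1. lra. Qed.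

Definition ext k (psi : PVert k -> R) : PVert (S k) -> R := fun x =>
  match x with
  | inl v => psi v
  | inr (e, None) => psi (fst (rsof k e)) + (psi (snd (rsof k e)) - psi (fst (rsof k e))) / 3
  | inr (e, Some _) => psi (fst (rsof k e)) + 2 * (psi (snd (rsof k e)) - psi (fst (rsof k e))) / 3
  end.

Lemma ext_Lip k psi eps : Lipf k psi eps -> Lipf (S k) (ext k psi) (eps / 3).
Proof. intros HL u v [[e x] Hx].
 assert (Hr := HL _ _ (adj_rs k e)).
 destruct x; simpl in Hx; fold (rsof k e) in Hx;
 destruct Hx as [Hx|Hx]; injection Hx; intros; subst; simpl.
 all: apply abs_bnd in Hr; apply Rabs_le; lra.
Qed.

Fixpoint extN (m : nat) : forall k, (PVert k -> R) -> PVert (addS m k) -> R :=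
  match m return forall k, (PVert k -> R) -> PVert (addS m k) -> R with
  | O => fun k psi => psi
  | S m' => fun k psi => extN m' (S k) (ext k psi) end.

Lemma extN_up m : forall k psi v, extN m k psi (up m k v) = psi v.
Proof. induction m; simpl; auto. intros. rewrite IHm. reflexivity. Qed.

Lemma extN_Lip m : forall k psi eps, Lipf k psi eps -> Lipf (addS m k) (extN m k psi) (eps / 3^m).
Proof. induction m; simpl; intros.
 - replace (eps/1) with eps by field; auto.
 - specialize (IHm _ _ _ (ext_Lip _ _ _ H)).
   replace (eps/(3*3^m)) with (eps/3/3^m) by (field; apply pow_nonzero; lra). auto. Qed.

Lemma dist_lb m k psi u v w : Lipf k psi 1 -> pwalk o (addS m k) (up m k u) (up m k v) w ->
  3 ^ m * Rabs (psi u - psi v) <= pdist o (addS m k) (up m k u) (up m k v).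
Proof. intros HL HW. unfold pdist. apply (Rinf_ge _ (INR w)). eauto.
 intros y [n [Hn ->]]. pose proof (walk_bound _ _ _ _ _ _ (extN_Lip m k psi 1 HL) Hn).
 rewrite !extN_up in H. pose proof (pow_lt 3 m).
 apply Rmult_le_compat_l with (r := 3 ^ m) in H; [|lra].
 replace (3 ^ m * (INR n * (1 / 3 ^ m))) with (INR n) in H by (field; lra). auto. Qed.

Lemma pends_neq k e : fst (pends o k e) <> snd (pends o k e).
Proof. destruct k; simpl. discriminate. destruct e as [e x]; destruct x; simpl; intro H; inversion H. Qed.

Lemma dist_edge m k e : 3 ^ m <= pdist o (addS m k) (up m k (fst (pends o k e))) (up m k (snd (pends o k e))).
Proof.
 set (psi := fun w => if excluded_middle_informative (w = fst (pends o k e)) then 1 else 0).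
 assert (HL : Lipf k psi 1).
 { intros u v _. unfold psi. destruct (excluded_middle_informative _); destruct (excluded_middle_informative _); apply Rabs_le; lra. }
 assert (W : pwalk o (addS m k) (up m k (fst (pends o k e))) (up m k (snd (pends o k e))) (3 ^ m)).
 { apply walk_up. exists e. left. destruct (pends o k e); reflexivity. }
 pose proof (dist_lb _ _ _ _ _ _ HL W). unfold psi in H.
 destruct (excluded_middle_informative _) as [_|C]; [|congruence].
 destruct (excluded_middle_informative _) as [C|_]. exfalso; apply (pends_neq k e); auto.
 replace (Rabs (1 - 0)) with 1 in H. lra. rewrite Rabs_pos_eq; lra. Qed.

Lemma dist_t m k e i j : i <> j ->
  2 * 3 ^ m <= pdist o (addS m (S k)) (up m (S k) (inr (e, Some i))) (up m (S k) (inr (e, Some j))).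
Proof. intros Hij.
 set (psi := fun x : PVert (S k) => match x with
   | inl w => if excluded_middle_informative (w = snd (rsof k e)) then 1 else 0
   | inr (e', None) => if excluded_middle_informative (e' = e) then 1 else 0
   | inr (e', Some j') => if excluded_middle_informative (e' = e /\ j' = i) then 2 else 0 end).
 assert (HL : Lipf (S k) psi 1).
 { intros u v [[e' x] Hx]. destruct x; simpl in Hx; fold (rsof k e') in Hx;
   destruct Hx as [Hx|Hx]; injection Hx; intros; subst; simpl;
   repeat match goal with |- context[excluded_middle_informative ?P] => destruct (excluded_middle_informative P) end;
   try (match goal with H: _ /\ _ |- _ => destruct H end); subst; try congruence; apply Rabs_le; lra. }
 assert (W : pwalk o (addS m (S k)) (up m (S k) (inr (e, Some i))) (up m (S k) (inr (e, Some j))) (3 ^ m + 3 ^ m)).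
 { eapply pwalk_app. apply walk_up, padj_sym, adjBT. apply walk_up, adjBT. }
 pose proof (dist_lb _ _ _ _ _ _ HL W). unfold psi in H.
 destruct (excluded_middle_informative (e = e /\ i = i)) as [_|C]; [|tauto].
 destruct (excluded_middle_informative (e = e /\ j = i)) as [[_ C]|_]. congruence.
 replace (Rabs (2 - 0)) with 2 in H. lra. rewrite Rabs_pos_eq; lra. Qed.

Lemma pdist_adj n u v : padj o n u v -> pdist o n u v <= 1.
Proof. intros H. unfold pdist. apply (Rinf_le _ _ 0). exists 1%nat; split; auto using pwalk1. simpl; auto.
 intros y [k [_ ->]]. apply pos_INR. Qed.

Lemma pdist_nonneg n u v : 0 <= pdist o n u v.
Proof. apply Rinf_nonneg. intros y [k [_ ->]]. apply pos_INR. Qed.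
End G.


Section K.
Variable Y : Banach.
Variable N : Y -> R.
Hypothesis HN : equiv_norm Y N.
Variable p c : R.
Hypothesis hp : 1 < p.
Hypothesis hc : 0 < c.
Hypothesis hb : forall t, 0 < t -> t <= 2 -> beta_modulus Y N t >= c * Rpower t p.

Lemma N_scal k v : N (vscal Y k v) = Rabs k * N v.
Proof. destruct HN as (_&_&Hs&_); auto. Qed.
Lemma N_nonneg v : 0 <= N v.
Proof. destruct HN as (Hn&_); auto. Qed.

Definition delta G H := 2 / 3 * c * Rpower (2 * G) p / Rpower H (p - 1).

Lemma Rpower_pos x y : 0 < Rpower x y.
Proof. unfold Rpower; apply exp_pos. Qed.

Lemma Rpower_Ropp_inv x y : 0 < x -> Rpower (/ x) y = / Rpower x y.
Proof. intros. unfold Rpower. rewrite ln_Rinv by auto. rewrite <- exp_Ropp. f_equal; ring. Qed.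

Lemma delta_pos G H : 0 < delta G H.
Proof. unfold delta. pose proof (Rpower_pos (2*G) p). pose proof (Rpower_pos H (p-1)).
 apply Rdiv_lt_0_compat; [|lra]. apply Rmult_lt_0_compat; lra. Qed.

Lemma key G H A sg (r bb s : Y) (ts : nat -> Y) :
  0 < G -> G <= A -> A <= H -> 0 < sg ->
  N (vsub Y bb r) <= sg * A -> (forall n, N (vsub Y (ts n) bb) <= sg * A) ->
  (forall n, N (vsub Y s (ts n)) <= sg * A) ->
  (forall i j, i <> j -> 2 * sg * G <= N (vsub Y (ts i) (ts j))) ->
  N (vsub Y s r) <= 3 * sg * (A - delta G H).
Proof.
 intros HG HGA HAH Hsg H1 H2 H3 H4.
 assert (HA : 0 < A) by lra. assert (HD : 0 < sg * A) by (apply Rmult_lt_0_compat; lra).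
 set (k := 1 / (sg * A)).
 assert (Hk : Rabs k = k). { apply Rabs_pos_eq. unfold k. apply Rlt_le, Rdiv_lt_0_compat; lra. }
 set (x := vscal Y k (vsub Y bb r)). set (y := fun n => vscal Y k (vsub Y (ts n) bb)).
 set (t := 2 * G / A).
 assert (Ht0 : 0 < t) by (unfold t; apply Rdiv_lt_0_compat; lra).
 assert (Ht2 : t <= 2). { unfold t. apply (Rmult_le_reg_r A); auto. field_simplify; nra. }
 pose proof (hb t Ht0 Ht2) as Hbt. unfold beta_modulus in Hbt.
 set (T := fun w => exists n, w = N (vadd Y x (y n)) / 2) in Hbt.
 set (S := fun v => exists (x : Y) (y : nat -> Y), N x <= 1 /\ (forall n, N (y n) <= 1) /\ t <= sep Y N y /\
            v = Rinf (fun w => exists n, w = N (vadd Y x (y n)) / 2)) in Hbt.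
 assert (Hx : N x <= 1). { unfold x. rewrite N_scal, Hk. unfold k. apply (Rmult_le_reg_l (sg*A)); auto. field_simplify; lra. }
 assert (Hy : forall n, N (y n) <= 1). { intro n. unfold y. rewrite N_scal, Hk. unfold k. apply (Rmult_le_reg_l (sg*A)); auto. specialize (H2 n). field_simplify; lra. }
 assert (Hxy : forall n, N (vadd Y x (y n)) = k * N (vsub Y (ts n) r)).
 { intro n. unfold x, y. rewrite <- vscal_distr_v, N_scal, Hk. rewrite vadd_comm, vsub_add. auto. }
 assert (Hsep : t <= sep Y N y).
 { unfold sep. apply (Rinf_ge _ (N (vsub Y (y 0%nat) (y 1%nat)))). exists 0%nat, 1%nat; split; auto.
   intros w [m [n [Hmn ->]]]. unfold y. rewrite vsub_scal, vsub_sub, N_scal, Hk.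
   specialize (H4 _ _ Hmn). unfold t, k. apply (Rmult_le_reg_l (sg*A)); auto. field_simplify; try lra. }
 assert (HT : S (Rinf T)). { exists x, y. repeat split; auto. }
 assert (HSb : forall v, S v -> v <= 1).
 { intros v [x' [y' [Hx' [Hy' [_ ->]]]]]. apply Rle_trans with (N (vadd Y x' (y' 0%nat)) / 2).
   apply (Rinf_le _ _ 0). exists 0%nat; auto. intros w [n ->]. pose proof (N_nonneg (vadd Y x' (y' n))); lra.
   destruct HN as (_&_&_&Htr&_). pose proof (Htr x' (y' 0%nat)). specialize (Hy' 0%nat). lra. }
 pose proof (Rsup_ge S _ 1 HT HSb) as HS.
 assert (Hlow : (N (vsub Y s r) - sg * A) * k / 2 <= Rinf T).
 { apply (Rinf_ge _ (N (vadd Y x (y 0%nat)) / 2)). exists 0%nat; auto.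
   intros w [n ->]. rewrite Hxy. pose proof (N_tri Y N HN s (ts n) r). specialize (H3 n).
   assert (0 < k) by (unfold k; apply Rdiv_lt_0_compat; lra). nra. }
 assert (Hfin : N (vsub Y s r) <= 3 * sg * A - 2 * sg * A * (c * Rpower t p)).
 { assert ((N (vsub Y s r) - sg * A) * k / 2 <= 1 - c * Rpower t p) as Hq by lra.
   unfold k in Hq. apply (Rmult_le_compat_l (2 * sg * A)) in Hq; [|lra].
   replace (2 * sg * A * ((N (vsub Y s r) - sg * A) * (1 / (sg * A)) / 2)) with (N (vsub Y s r) - sg * A) in Hq by (field; lra).
   nra. }
 assert (HAt : Rpower (2 * G) p / Rpower H (p - 1) <= A * Rpower t p).
 { unfold t. unfold Rdiv. rewrite <- (Rpower_mult_distr (2*G) (/A) p) by (try apply Rinv_0_lt_compat; lra).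
   rewrite Rpower_Ropp_inv by lra.
   assert (EA : Rpower A p = A * Rpower A (p - 1)).
   { replace p with (1 + (p - 1)) at 1 by ring. rewrite Rpower_plus, Rpower_1; auto. }
   rewrite EA. pose proof (Rpower_pos (2*G) p). pose proof (Rpower_pos A (p-1)). pose proof (Rpower_pos H (p-1)).
   assert (Rpower A (p-1) <= Rpower H (p-1)) by (apply Rle_Rpower_l; lra).
   replace (A * (Rpower (2 * G) p * / (A * Rpower A (p - 1)))) with (Rpower (2 * G) p * / Rpower A (p - 1)) by (field; lra).
   apply Rmult_le_compat_l; [lra|]. apply Rinv_le_contravar; lra. }
 unfold delta. 
 assert (Hfe : 3 * sg * (A - 2 / 3 * c * Rpower (2 * G) p / Rpower H (p - 1)) = 3 * sg * A - 2 * sg * c * (Rpower (2 * G) p / Rpower H (p - 1))) by (field; pose proof (Rpower_pos H (p-1)); lra).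
 rewrite Hfe.
 assert (2 * sg * c * (Rpower (2 * G) p / Rpower H (p - 1)) <= 2 * sg * c * (A * Rpower t p)).
 { apply Rmult_le_compat_l; auto. apply Rmult_le_pos; lra. }
 lra.
Qed.

Variable o : orientation.
Definition Hyp G H n (f : PVert n -> Y) :=
  (forall u v, padj o n u v -> N (vsub Y (f u) (f v)) <= H) /\
  (forall u v, G * pdist o n u v <= N (vsub Y (f u) (f v))).

Lemma IndL G H (HG : 0 < G) m : forall k (f : PVert (addS m k) -> Y), Hyp G H (addS m k) f ->
  forall e, N (vsub Y (f (up m k (fst (pends o k e)))) (f (up m k (snd (pends o k e))))) <= 3 ^ m * (H - INR m * delta G H).
Proof.
 induction m; intros k f [Ha Hc] e.
 - simpl. replace (1 * (H - 0 * delta G H)) with H by ring. apply Ha. exists e; left. exact (surjective_pairing (pends o k e)).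
 - set (A := H - INR m * delta G H). set (sg := 3 ^ m).
   assert (IH := IHm (S k) f (conj Ha Hc)).
   assert (E1 := IH (e, ERB)).
   change (N (vsub Y (f (up m (S k) (inl (fst (rsof o k e))))) (f (up m (S k) (inr (e, None))))) <= sg * A) in E1.
   assert (E2 := fun n => IH (e, EBT n)).
   change (forall n, N (vsub Y (f (up m (S k) (inr (e, None)))) (f (up m (S k) (inr (e, Some n))))) <= sg * A) in E2.
   assert (E3 := fun n => IH (e, ETS n)).
   change (forall n, N (vsub Y (f (up m (S k) (inr (e, Some n)))) (f (up m (S k) (inl (snd (rsof o k e)))))) <= sg * A) in E3.
   assert (Hsg : 0 < sg) by (apply pow_lt; lra).
   assert (HGA : G <= A).
   { pose proof (dist_edge o m (S k) (e, ERB)) as Hd. pose proof (Hc (up m (S k) (fst (pends o (S k) (e, ERB)))) (up m (S k) (snd (pends o (S k) (e, ERB))))) as Hc'.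
     specialize (IH (e, ERB)). change (3 ^ m) with sg in Hd, IH. fold A in IH.
     assert (G * sg <= G * pdist o (addS m (S k)) (up m (S k) (fst (pends o (S k) (e, ERB)))) (up m (S k) (snd (pends o (S k) (e, ERB))))) by (apply Rmult_le_compat_l; lra).
     change (addS (S m) k) with (addS m (S k)) in Hc'. assert (Hq : sg * G <= sg * A) by lra. apply Rmult_le_reg_l in Hq; auto. }
   assert (HAH : A <= H). { unfold A. pose proof (delta_pos G H). pose proof (pos_INR m). nra. }
   assert (K := key G H A sg (f (up m (S k) (inl (fst (rsof o k e))))) (f (up m (S k) (inr (e, None)))) (f (up m (S k) (inl (snd (rsof o k e))))) (fun n => f (up m (S k) (inr (e, Some n)))) HG HGA HAH Hsg).
   rewrite N_sym in K by exact HN. specialize (K E1).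
   assert (K2 : forall n, N (vsub Y (f (up m (S k) (inr (e, Some n)))) (f (up m (S k) (inr (e, None))))) <= sg * A).
   { intro n. rewrite N_sym by exact HN. auto. }
   specialize (K K2).
   assert (K3 : forall n, N (vsub Y (f (up m (S k) (inl (snd (rsof o k e))))) (f (up m (S k) (inr (e, Some n))))) <= sg * A).
   { intro n. rewrite N_sym by exact HN. auto. }
   specialize (K K3).
   assert (K4 : forall i j, i <> j -> 2 * sg * G <= N (vsub Y (f (up m (S k) (inr (e, Some i)))) (f (up m (S k) (inr (e, Some j)))))).
   { intros i j Hij. pose proof (dist_t o m k e i j Hij) as Hd. pose proof (Hc (up m (S k) (inr (e, Some i))) (up m (S k) (inr (e, Some j)))) as Hc'.
     change (addS (S m) k) with (addS m (S k)) in Hc'.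
     change (3 ^ m) with sg in Hd. nra. }
   specialize (K K4).
   change (N (vsub Y (f (up m (S k) (inl (fst (pends o k e))))) (f (up m (S k) (inl (snd (pends o k e)))))) <= 3 * sg * (H - INR (S m) * delta G H)).
   replace (H - INR (S m) * delta G H) with (A - delta G H) by (unfold A; rewrite S_INR; ring).
   unfold rsof in K. destruct (o k e); destruct (pends o k e) as [u v]; simpl in K |- *; auto.
   rewrite N_sym by exact HN. auto.
Qed.
End K.


Lemma Lip_const Y o n f : bi_Lipschitz Y o n f -> is_Lip_const Y o n f (Lip Y o n f) /\ 0 <= Lip Y o n f.
Proof. intros [[L0 H0] _].
 assert (HS : 0 <= Rmax L0 0 /\ is_Lip_const Y o n f (Rmax L0 0)).
 { split. apply Rmax_r. intros u v. pose proof (pdist_nonneg o n u v). specialize (H0 u v).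
   pose proof (Rmax_l L0 0). pose proof (vnorm_nonneg Y (vsub Y (f u) (f v))). nra. }
 split; [| unfold Lip; apply (Rinf_ge _ _ 0 HS); intros y [Hy _]; auto].
 intros u v. pose proof (pdist_nonneg o n u v) as Hd.
 destruct (Rle_lt_or_eq_dec 0 _ Hd) as [Hp|He].
 - assert (Hq : vnorm Y (vsub Y (f u) (f v)) / pdist o n u v <= Lip Y o n f).
   { unfold Lip. apply (Rinf_ge _ _ _ HS). intros L [HL0 HL]. specialize (HL u v).
     apply (Rmult_le_reg_r (pdist o n u v)); auto.
     replace (vnorm Y (vsub Y (f u) (f v)) / pdist o n u v * pdist o n u v) with (vnorm Y (vsub Y (f u) (f v))) by (field; lra). lra. }
   apply (Rmult_le_compat_r (pdist o n u v)) in Hq; [|lra].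
   replace (vnorm Y (vsub Y (f u) (f v)) / pdist o n u v * pdist o n u v) with (vnorm Y (vsub Y (f u) (f v))) in Hq by (field; lra). lra.
 - rewrite <- He. destruct HS as [_ HS]. specialize (HS u v). rewrite <- He in HS. lra.
Qed.

Lemma invLip_const Y o n f : bi_Lipschitz Y o n f -> is_invLip_const Y o n f (invLip Y o n f) /\ 0 <= invLip Y o n f.
Proof. intros [_ [L0 H0]].
 assert (HS : 0 <= Rmax L0 0 /\ is_invLip_const Y o n f (Rmax L0 0)).
 { split. apply Rmax_r. intros u v. pose proof (pdist_nonneg o n u v). specialize (H0 u v).
   pose proof (Rmax_l L0 0). pose proof (vnorm_nonneg Y (vsub Y (f u) (f v))). nra. }
 split; [| unfold invLip; apply (Rinf_ge _ _ 0 HS); intros y [Hy _]; auto].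
 intros u v. pose proof (vnorm_nonneg Y (vsub Y (f u) (f v))) as Hd.
 destruct (Rle_lt_or_eq_dec 0 _ Hd) as [Hp|He].
 - assert (Hq : pdist o n u v / vnorm Y (vsub Y (f u) (f v)) <= invLip Y o n f).
   { unfold invLip. apply (Rinf_ge _ _ _ HS). intros L [HL0 HL]. specialize (HL u v).
     apply (Rmult_le_reg_r (vnorm Y (vsub Y (f u) (f v)))); auto.
     replace (pdist o n u v / vnorm Y (vsub Y (f u) (f v)) * vnorm Y (vsub Y (f u) (f v))) with (pdist o n u v) by (field; lra). lra. }
   apply (Rmult_le_compat_r (vnorm Y (vsub Y (f u) (f v)))) in Hq; [|lra].
   replace (pdist o n u v / vnorm Y (vsub Y (f u) (f v)) * vnorm Y (vsub Y (f u) (f v))) with (pdist o n u v) in Hq by (field; lra). lra.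
 - rewrite <- He. destruct HS as [_ HS]. specialize (HS u v). rewrite <- He in HS. lra.
Qed.

Theorem theorem4 (Y : Banach) (p : R) (hp : 1 < p)
  (hY : exists N : Y -> R, equiv_norm Y N /\ beta_power_type Y N p) :
  exists C : R, 0 < C /\
    forall (o : orientation) (l : nat), (1 <= l)%nat ->
      cY_ge Y o l (C * Rpower (INR l) (1 / p)).
Proof.
 destruct hY as [N [HN [c [hc hb]]]].
 pose proof HN as (_&_&_&_&a&b&ha&hb'&Hab).
 set (ka := 2 / 3 * c * Rpower 2 p * Rpower a p / Rpower b p).
 assert (Hka : 0 < ka).
 { unfold ka. pose proof (Rpower_pos 2 p). pose proof (Rpower_pos a p). pose proof (Rpower_pos b p).
   apply Rdiv_lt_0_compat; auto. repeat apply Rmult_lt_0_compat; lra. }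
 exists (Rpower ka (1 / p)). split. apply Rpower_pos.
 intros o l Hl.
 enough (E : cY_ge Y o (addS l 0) (Rpower ka (1 / p) * Rpower (INR l) (1 / p))) by (rewrite addS_0 in E; exact E).
 intros f Hinj Hbi.
 destruct (Lip_const _ _ _ _ Hbi) as [HL1 HL1p]. destruct (invLip_const _ _ _ _ Hbi) as [HL2 HL2p].
 set (L1 := Lip Y o (addS l 0) f) in *. set (L2 := invLip Y o (addS l 0) f) in *.
 set (u0 := up l 0 (fst (pends o 0 tt))). set (v0 := up l 0 (snd (pends o 0 tt))).
 pose proof (dist_edge o l 0 tt) as Hd0. fold u0 v0 in Hd0.
 pose proof (pow_lt 3 l ltac:(lra)) as H3.
 assert (HL2pos : 0 < L2).
 { specialize (HL2 u0 v0). pose proof (vnorm_nonneg Y (vsub Y (f u0) (f v0))).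
   destruct (Rle_lt_or_eq_dec 0 _ HL2p) as [?|He]; auto. rewrite <- He in HL2. lra. }
 set (G := a / L2). set (H := b * L1).
 assert (HG : 0 < G) by (unfold G; apply Rdiv_lt_0_compat; lra).
 assert (Hyp0 : Hyp Y N o G H (addS l 0) f).
 { split.
   - intros u v Huv. pose proof (pdist_adj o _ _ _ Huv). pose proof (pdist_nonneg o (addS l 0) u v).
     specialize (HL1 u v). destruct (Hab (vsub Y (f u) (f v))) as [_ Hb].
     unfold H. apply Rle_trans with (b * vnorm Y (vsub Y (f u) (f v))); auto.
     apply Rmult_le_compat_l; [lra|]. nra.
   - intros u v. specialize (HL2 u v). destruct (Hab (vsub Y (f u) (f v))) as [Ha _].
     apply Rle_trans with (a * vnorm Y (vsub Y (f u) (f v))); auto.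
     unfold G. apply (Rmult_le_reg_l L2); auto.
     replace (L2 * (a / L2 * pdist o (addS l 0) u v)) with (a * pdist o (addS l 0) u v) by (field; lra).
     pose proof (vnorm_nonneg Y (vsub Y (f u) (f v))). nra. }
 pose proof (IndL Y N HN p c hp hc hb o G H HG l 0 f Hyp0 tt) as HI. fold u0 v0 in HI.
 destruct Hyp0 as [_ Hco]. specialize (Hco u0 v0).
 assert (HGH : G <= H - INR l * delta p c G H).
 { assert (G * 3 ^ l <= 3 ^ l * (H - INR l * delta p c G H)) by nra. nra. }
 pose proof (delta_pos p c hc G H) as Hdp.
 pose proof (pos_INR l) as Hlp.
 assert (HHp : 0 < H). { pose proof (Rmult_le_pos _ _ Hlp (Rlt_le _ _ Hdp)). lra. }
 assert (HL1pos : 0 < L1). { unfold H in HHp. destruct (Rle_lt_or_eq_dec 0 _ HL1p) as [?|He]; auto. rewrite <- He in HHp. lra. }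
 assert (EH : Rpower H p = H * Rpower H (p-1)).
 { replace p with (1+(p-1)) at 1 by ring. rewrite Rpower_plus, Rpower_1; auto. }
 assert (Hm : INR l * (2/3*c*Rpower (2*G) p) <= Rpower H p).
 { unfold delta in HGH. rewrite EH. pose proof (Rpower_pos H (p-1)) as HQ.
   set (X := 2/3*c*Rpower (2*G) p) in *.
   assert (Hq : INR l * (X / Rpower H (p-1)) <= H) by lra.
   apply (Rmult_le_compat_r (Rpower H (p-1))) in Hq; [|lra].
   replace (INR l * (X / Rpower H (p - 1)) * Rpower H (p - 1)) with (INR l * X) in Hq by (field; lra). lra. }
 assert (EG : Rpower (2*G) p = Rpower 2 p * (Rpower a p * / Rpower L2 p)).
 { unfold G, Rdiv. rewrite <- (Rpower_mult_distr 2 (a * / L2) p).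
   rewrite <- (Rpower_mult_distr a (/ L2) p) by (try apply Rinv_0_lt_compat; lra).
   rewrite Rpower_Ropp_inv; auto.
   lra. apply Rmult_lt_0_compat; auto. apply Rinv_0_lt_compat; lra. }
 assert (EHp : Rpower H p = Rpower b p * Rpower L1 p).
 { unfold H. rewrite Rpower_mult_distr; auto. }
 rewrite EG, EHp in Hm.
 assert (Hlpos : 0 < INR l) by (apply lt_0_INR; lia).
 assert (Hk : ka * INR l <= Rpower (L1 * L2) p).
 { rewrite <- Rpower_mult_distr by auto.
   pose proof (Rpower_pos b p). pose proof (Rpower_pos L2 p).
   apply (Rmult_le_reg_l (Rpower b p)); auto.
   replace (Rpower b p * (ka * INR l)) with ((INR l * (2 / 3 * c * (Rpower 2 p * (Rpower a p * / Rpower L2 p)))) * Rpower L2 p)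
     by (unfold ka; field; lra).
   apply (Rmult_le_compat_r (Rpower L2 p)) in Hm; [|lra]. lra. }
 rewrite Rpower_mult_distr by auto.
 apply Rle_trans with (Rpower (Rpower (L1 * L2) p) (1 / p)).
 - apply Rle_Rpower_l. apply Rlt_le, Rdiv_lt_0_compat; lra. split; auto. apply Rmult_lt_0_compat; auto.
 - rewrite Rpower_mult. replace (p * (1 / p)) with 1 by (field; lra). rewrite Rpower_1. lra.
   apply Rmult_lt_0_compat; auto.
Qed.
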